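(* Let $X$ be a real Banach lattice equipped with a sufficiently rich topology $\tau$, and let $A$ be a $\tau$-compact, convex, positive-solid subset of $X_+$. Then for every extreme point $a$ of $A$ there exists an order extreme point $b$ of $A$ with $a\le b$.
   Context: A locally convex Hausdorff topology $\tau$ on a Banach lattice $X$ is called sufficiently rich if (i) the space $X^\tau$ of $\tau$-continuous linear functionals on $X$ is a Banach lattice (with lattice operations given by the Riesz–Kantorovich formulas), and (ii) $X_+$ is $\tau$-closed. A set $A\subseteq X_+$ is positive-solid if whenever $x\in X_+$ and $x\le z$ for some $z\in A$, then $x\in A$. A point $b\in A$ is an order extreme point of $A$ if for all $x_0,x_1\in A$ and $t\in(0,1)$, $b\le(1-t)x_0+tx_1$ implies $x_0=b=x_1$. *)

(* Defs.v *)
From Stdlib Require Import Reals List.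
Open Scope R_scope.

Record BanachLattice := {
  car :> Type;
  vadd : car -> car -> car;
  vzero : car;
  vopp : car -> car;
  vscal : R -> car -> car;
  vle : car -> car -> Prop;
  vsup : car -> car -> car;
  vnorm : car -> R;
  vaddA : forall x y z, vadd x (vadd y z) = vadd (vadd x y) z;
  vaddC : forall x y, vadd x y = vadd y x;
  vadd0 : forall x, vadd x vzero = x;
  vaddN : forall x, vadd x (vopp x) = vzero;
  vscal1 : forall x, vscal 1 x = x;
  vscalA : forall s t x, vscal s (vscal t x) = vscal (s * t) x;
  vscalDr : forall t x y, vscal t (vadd x y) = vadd (vscal t x) (vscal t y);
  vscalDl : forall s t x, vscal (s + t) x = vadd (vscal s x) (vscal t x);
  vle_refl : forall x, vle x x;
  vle_anti : forall x y, vle x y -> vle y x -> x = y;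
  vle_trans : forall x y z, vle x y -> vle y z -> vle x z;
  vle_add : forall x y z, vle x y -> vle (vadd x z) (vadd y z);
  vle_scal : forall t x y, 0 <= t -> vle x y -> vle (vscal t x) (vscal t y);
  vsup_ub_l : forall x y, vle x (vsup x y);
  vsup_ub_r : forall x y, vle y (vsup x y);
  vsup_least : forall x y z, vle x z -> vle y z -> vle (vsup x y) z;
  vnorm_eq0 : forall x, vnorm x = 0 -> x = vzero;
  vnorm_scal : forall t x, vnorm (vscal t x) = Rabs t * vnorm x;
  vnorm_triangle : forall x y, vnorm (vadd x y) <= vnorm x + vnorm y;
  vnorm_lattice : forall x y,
      vle (vsup x (vopp x)) (vsup y (vopp y)) -> vnorm x <= vnorm y;
  vcomplete : forall u : nat -> car,
      (forall eps, 0 < eps -> exists N, forall n m, (N <= n)%nat -> (N <= m)%nat ->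
          vnorm (vadd (u n) (vopp (u m))) < eps) ->
      exists l, forall eps, 0 < eps -> exists N, forall n, (N <= n)%nat ->
          vnorm (vadd (u n) (vopp l)) < eps
}.

Arguments vadd {_}. Arguments vzero {_}. Arguments vopp {_}. Arguments vscal {_}.
Arguments vle {_}. Arguments vsup {_}. Arguments vnorm {_}.

Definition vsub {X : BanachLattice} (x y : X) : X := vadd x (vopp y).

Definition positive_cone (X : BanachLattice) : X -> Prop := fun x => vle vzero x.

Definition is_topology {X : Type} (op : (X -> Prop) -> Prop) : Prop :=
  op (fun _ => True) /\
  (forall U V, op U -> op V -> op (fun x => U x /\ V x)) /\
  (forall (I : Type) (U : I -> X -> Prop), (forall i, op (U i)) ->
      op (fun x => exists i, U i x)).

Definition hausdorff {X : Type} (op : (X -> Prop) -> Prop) : Prop :=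
  forall x y : X, x <> y -> exists U V, op U /\ op V /\ U x /\ V y /\
     (forall z, U z -> V z -> False).

Definition convex_set {X : BanachLattice} (C : X -> Prop) : Prop :=
  forall x y t, C x -> C y -> 0 <= t <= 1 ->
    C (vadd (vscal (1 - t) x) (vscal t y)).

Definition locally_convex_hausdorff {X : BanachLattice} (op : (X -> Prop) -> Prop) : Prop :=
  is_topology op /\ hausdorff op /\
  (forall (U : X -> Prop) x y, op U -> U (vadd x y) ->
     exists V W, op V /\ op W /\ V x /\ W y /\
       forall v w, V v -> W w -> U (vadd v w)) /\
  (forall (U : X -> Prop) t x, op U -> U (vscal t x) ->
     exists delta V, 0 < delta /\ op V /\ V x /\
       forall s v, Rabs (s - t) < delta -> V v -> U (vscal s v)) /\
  (forall (U : X -> Prop) x, op U -> U x ->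
     exists V, op V /\ V x /\ convex_set V /\ forall z, V z -> U z).

Definition tau_continuous {X : BanachLattice} (op : (X -> Prop) -> Prop) (f : X -> R) : Prop :=
  forall x eps, 0 < eps -> exists U, op U /\ U x /\
     forall y, U y -> Rabs (f y - f x) < eps.

Definition linear_functional {X : BanachLattice} (f : X -> R) : Prop :=
  (forall x y, f (vadd x y) = f x + f y) /\ (forall t x, f (vscal t x) = t * f x).

Definition tau_dual {X : BanachLattice} (op : (X -> Prop) -> Prop) (f : X -> R) : Prop :=
  linear_functional f /\ tau_continuous op f.

Definition RK_sup {X : BanachLattice} (f g h : X -> R) : Prop :=
  forall x, vle vzero x ->
    is_lub (fun r => exists y, vle vzero y /\ vle y x /\ r = f y + g (vsub x y)) (h x).

(** X^tau is a Banach lattice with the Riesz–Kantorovich lattice operations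
    (the vector operations being pointwise and the order the dual order). *)
Definition dual_is_banach_lattice {X : BanachLattice} (op : (X -> Prop) -> Prop) : Prop :=
  (forall f g, tau_dual op f -> tau_dual op g ->
     exists h, tau_dual op h /\ RK_sup f g h) /\
  exists N : (X -> R) -> R,
    (forall f, tau_dual op f -> N f = 0 -> forall x, f x = 0) /\
    (forall t f, tau_dual op f -> N (fun x => t * f x) = Rabs t * N f) /\
    (forall f g, tau_dual op f -> tau_dual op g ->
        N (fun x => f x + g x) <= N f + N g) /\
    (forall f g af ag, tau_dual op f -> tau_dual op g -> tau_dual op af -> tau_dual op ag ->
        RK_sup f (fun x => - f x) af -> RK_sup g (fun x => - g x) ag ->
        (forall x, vle vzero x -> af x <= ag x) -> N f <= N g) /\
    (forall u : nat -> X -> R, (forall n, tau_dual op (u n)) ->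
      (forall eps, 0 < eps -> exists M, forall n m, (M <= n)%nat -> (M <= m)%nat ->
          N (fun x => u n x - u m x) < eps) ->
      exists l, tau_dual op l /\ forall eps, 0 < eps -> exists M, forall n, (M <= n)%nat ->
          N (fun x => u n x - l x) < eps).

Definition sufficiently_rich {X : BanachLattice} (op : (X -> Prop) -> Prop) : Prop :=
  locally_convex_hausdorff op /\
  dual_is_banach_lattice op /\
  op (fun x => ~ positive_cone X x).

Definition compact_in {X : Type} (op : (X -> Prop) -> Prop) (A : X -> Prop) : Prop :=
  forall (I : Type) (U : I -> X -> Prop), (forall i, op (U i)) ->
    (forall x, A x -> exists i, U i x) ->
    exists l : list I, forall x, A x -> exists i, In i l /\ U i x.

Definition positive_solid {X : BanachLattice} (A : X -> Prop) : Prop :=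
  forall x z, vle vzero x -> vle x z -> A z -> A x.

Definition extreme_point {X : BanachLattice} (A : X -> Prop) (a : X) : Prop :=
  A a /\ forall x0 x1 t, A x0 -> A x1 -> 0 < t < 1 ->
    a = vadd (vscal (1 - t) x0) (vscal t x1) -> x0 = a /\ x1 = a.

Definition order_extreme_point {X : BanachLattice} (A : X -> Prop) (b : X) : Prop :=
  A b /\ forall x0 x1 t, A x0 -> A x1 -> 0 < t < 1 ->
    vle b (vadd (vscal (1 - t) x0) (vscal t x1)) -> x0 = b /\ b = x1.

(* Main.v *)
Require Import Defs.
From mathcomp Require ssreflect ssrbool boolp classical_sets.

Module ZornMod.
Import ssreflect ssrbool boolp classical_sets.
Lemma ZornP (T : Type) (R : T -> T -> Prop) :
  (forall t, R t t) -> (forall r s t, R r s -> R s t -> R r t) ->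
  (forall s t, R s t -> R t s -> s = t) ->
  (forall C : T -> Prop, (forall s t, C s -> C t -> R s t \/ R t s) -> exists t, forall s, C s -> R s t) ->
  exists t, forall s, R t s -> s = t.
Proof.
move=> Rr Rt Ra Rc.
have := @Zorn T (fun s t => `[< R s t >]).
case.
- by move=> t; apply/asboolP.
- by move=> r s t /asboolP H1 /asboolP H2; apply/asboolP; exact: Rt H1 H2.
- by move=> s t /asboolP H1 /asboolP H2; exact: Ra.
- move=> A tot.
  have H : forall s t, A s -> A t -> R s t \/ R t s.
    move=> s t As At; case: (tot s t As At) => /asboolP H; [left|right]; exact H.
  have [t Ht] := Rc A H.
  exists t; move=> s As; apply/asboolP; exact: Ht.
- move=> t Ht; exists t; move=> s Hs; apply: Ht; apply/asboolP; exact Hs.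
Qed.
End ZornMod.
From Stdlib Require Import Reals List Lra Classical ClassicalEpsilon FunctionalExtensionality PropExtensionality ProofIrrelevance.
Open Scope R_scope.
Arguments vaddA {_}. Arguments vaddC {_}. Arguments vadd0 {_}. Arguments vaddN {_}. Arguments vscal1 {_}. Arguments vscalA {_}. Arguments vscalDr {_}. Arguments vscalDl {_}. Arguments vle_refl {_}. Arguments vle_anti {_}. Arguments vle_trans {_}. Arguments vle_add {_}. Arguments vle_scal {_}. Arguments vsup_ub_l {_}. Arguments vsup_ub_r {_}. Arguments vsup_least {_}.

Section Alg.
Context {X : BanachLattice}.
Implicit Types x y z u v w : X.

Lemma vadd0l x : vadd vzero x = x.
Proof. rewrite vaddC; apply vadd0. Qed.
Lemma vaddNl x : vadd (vopp x) x = vzero.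
Proof. rewrite vaddC; apply vaddN. Qed.
Lemma vadd_cancel z x y : vadd z x = vadd z y -> x = y.
Proof.
  intro H. rewrite <- (vadd0l x), <- (vadd0l y), <- (vaddNl z), <- !vaddA, H. reflexivity.
Qed.
Lemma vopp_unique x y : vadd x y = vzero -> y = vopp x.
Proof. intro H. apply (vadd_cancel x). rewrite H, vaddN. reflexivity. Qed.
Lemma vscal0l x : vscal 0 x = vzero.
Proof.
  apply (vadd_cancel (vscal 0 x)). rewrite <- vscalDl, vadd0. f_equal; ring.
Qed.
Lemma vscal0r t : vscal t (@vzero X) = vzero.
Proof.
  apply (vadd_cancel (vscal t vzero)). rewrite <- vscalDr, !vadd0. reflexivity.
Qed.
Lemma vscalN1 x : vscal (-1) x = vopp x.
Proof.
  apply vopp_unique. rewrite <- (vscal1 x) at 1. rewrite <- vscalDl.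
  replace (1 + -1) with 0 by ring. apply vscal0l.
Qed.
Lemma vopp_scal t x : vopp (vscal t x) = vscal (- t) x.
Proof. rewrite <- vscalN1, vscalA. f_equal; ring. Qed.
Lemma vopp_add x y : vopp (vadd x y) = vadd (vopp x) (vopp y).
Proof. rewrite <- !vscalN1. apply vscalDr. Qed.
Lemma vopp_opp x : vopp (vopp x) = x.
Proof. rewrite <- !vscalN1, vscalA. replace (-1 * -1) with 1 by ring. apply vscal1. Qed.
Lemma vopp0 : vopp (@vzero X) = vzero.
Proof. rewrite <- vscalN1. apply vscal0r. Qed.
Lemma vadd_swap4 x y z w : vadd (vadd x y) (vadd z w) = vadd (vadd x z) (vadd y w).
Proof.
  rewrite !vaddA. f_equal. rewrite <- !vaddA. f_equal. apply vaddC.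
Qed.
Lemma vaddKr x y : vadd (vadd x y) (vopp y) = x.
Proof. rewrite <- vaddA, vaddN, vadd0. reflexivity. Qed.
Lemma vaddKl x y : vadd (vopp x) (vadd x y) = y.
Proof. rewrite vaddA, vaddNl, vadd0l. reflexivity. Qed.
Lemma vscalK t x : t <> 0 -> vscal t (vscal (/ t) x) = x.
Proof. intro. rewrite vscalA. replace (t * / t) with 1 by (field; auto). apply vscal1. Qed.

Lemma vle_addl z x y : vle x y -> vle (vadd z x) (vadd z y).
Proof. intro H. rewrite !(vaddC z). apply vle_add; auto. Qed.
Lemma vle_add2 x y u v : vle x y -> vle u v -> vle (vadd x u) (vadd y v).
Proof.
  intros H1 H2. apply vle_trans with (vadd y u). apply vle_add; auto. apply vle_addl; auto.
Qed.
Lemma vle_opp x y : vle x y -> vle (vopp y) (vopp x).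
Proof.
  intro H. pose proof (vle_add _ _ (vadd (vopp x) (vopp y)) H) as H'.
  rewrite vaddA, vaddN, vadd0l in H'.
  rewrite (vaddC (vopp x)), vaddA, vaddN, vadd0l in H'. exact H'.
Qed.
Lemma vle_sub x y : vle x y <-> vle vzero (vadd y (vopp x)).
Proof.
  split; intro H.
  - rewrite <- (vaddN x). apply vle_add; auto.
  - pose proof (vle_add _ _ x H) as H'. rewrite vadd0l, <- vaddA, vaddNl, vadd0 in H'. exact H'.
Qed.
End Alg.

Lemma set_ext {T : Type} (P Q : T -> Prop) : (forall x, P x <-> Q x) -> P = Q.
Proof. intro H. apply functional_extensionality; intro x. apply propositional_extensionality; auto. Qed.

Lemma op_ext {T : Type} (op : (T -> Prop) -> Prop) (P Q : T -> Prop) :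
  (forall x, P x <-> Q x) -> op P -> op Q.
Proof. intros H HP. rewrite <- (set_ext P Q H). exact HP. Qed.

Lemma fun_choice' {A B : Type} (P : A -> B -> Prop) :
  (forall a, exists b, P a b) -> exists f : A -> B, forall a, P a (f a).
Proof.
  intro H. exists (fun a => proj1_sig (constructive_indefinite_description _ (H a))).
  intro a. exact (proj2_sig (constructive_indefinite_description _ (H a))).
Qed.

Definition cmb {X : BanachLattice} (t : R) (x y : X) : X := vadd (vscal (1 - t) x) (vscal t y).

Section Top.
Context {X : BanachLattice} (tau : (X -> Prop) -> Prop) (Hlc : locally_convex_hausdorff tau).

Definition closed (K : X -> Prop) := tau (fun x => ~ K x).
Definition cont (f : X -> X) := forall (U : X -> Prop) x, tau U -> U (f x) ->
  exists V, tau V /\ V x /\ forall v, V v -> U (f v).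

Lemma op_union (I : Type) (U : I -> X -> Prop) : (forall i, tau (U i)) -> tau (fun x => exists i, U i x).
Proof. pose proof Hlc as HLC; destruct HLC as [[_ [_ H]] _]. apply H. Qed.
Lemma op_inter U V : tau U -> tau V -> tau (fun x => U x /\ V x).
Proof. pose proof Hlc as HLC; destruct HLC as [[_ [H _]] _]. apply H. Qed.
Lemma op_True : tau (fun _ => True).
Proof. pose proof Hlc as HLC; destruct HLC as [[H _] _]. apply H. Qed.
Lemma op_or U V : tau U -> tau V -> tau (fun x => U x \/ V x).
Proof.
  intros HU HV. apply op_ext with (fun x => exists b : bool, if b then U x else V x).
  - intro x; split. intros [[|] H]; auto. intros [H|H]; [exists true|exists false]; auto.
  - apply op_union. intros [|]; auto.
Qed.
Lemma op_local (P : X -> Prop) :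
  (forall x, P x -> exists O, tau O /\ O x /\ forall z, O z -> P z) -> tau P.
Proof.
  intro H.
  apply op_ext with (fun x => exists i : {O : X -> Prop | tau O /\ forall z, O z -> P z}, proj1_sig i x).
  - intro x; split.
    + intros [[O [HO1 HO2]] Hx]. simpl in Hx. auto.
    + intro Hx. destruct (H x Hx) as [O [HO1 [HO2 HO3]]].
      exists (exist _ O (conj HO1 HO3)). exact HO2.
  - apply op_union. intro i. exact (proj1 (proj2_sig i)).
Qed.
Lemma op_list_inter {I : Type} (U : I -> X -> Prop) (l : list I) :
  (forall i, tau (U i)) -> tau (fun x => forall i, In i l -> U i x).
Proof.
  intro HU. induction l as [|a l IH].
  - apply op_ext with (fun _ => True). intro x; split; auto. intros _ i []. apply op_True.
  - apply op_ext with (fun x => U a x /\ forall i, In i l -> U i x).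
    + intro x; split.
      * intros [H1 H2] i [<-|Hi]; auto.
      * intro H; split; auto. apply H; left; auto. intros i Hi; apply H; right; auto.
    + apply op_inter; auto.
Qed.
Lemma cont_preimage f U : cont f -> tau U -> tau (fun x => U (f x)).
Proof.
  intros Hf HU. apply op_local. intros x Hx. destruct (Hf U x HU Hx) as [V [HV [HVx HV2]]].
  exists V; auto.
Qed.
Lemma cont_transl c : cont (fun x => vadd x c).
Proof.
  pose proof Hlc as HLC; destruct HLC as [_ [_ [Hadd _]]]. intros U x HU Hx.
  destruct (Hadd U x c HU Hx) as [V [W [HV [HW [HVx [HWc H]]]]]].
  exists V; repeat split; auto.
Qed.
Lemma cont_scal s : cont (fun x => vscal s x).
Proof.
  pose proof Hlc as HLC; destruct HLC as [_ [_ [_ [Hsc _]]]]. intros U x HU Hx.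
  destruct (Hsc U s x HU Hx) as [d [V [Hd [HV [HVx H]]]]].
  exists V; repeat split; auto. intros v Hv. apply H; auto. rewrite Rminus_diag, Rabs_R0. exact Hd.
Qed.
Lemma cont_comp f g : cont f -> cont g -> cont (fun x => f (g x)).
Proof.
  intros Hf Hg U x HU Hx. destruct (Hf U (g x) HU Hx) as [V [HV [HVx H1]]].
  destruct (Hg V x HV HVx) as [W [HW [HWx H2]]]. exists W; auto.
Qed.

Lemma sub_joint U g y : tau U -> U (vadd y (vopp g)) ->
  exists V W, tau V /\ tau W /\ V g /\ W y /\ forall g' y', V g' -> W y' -> U (vadd y' (vopp g')).
Proof.
  intros HU H. pose proof Hlc as HLC; destruct HLC as [_ [_ [Hadd _]]].
  destruct (Hadd U y (vopp g) HU H) as [W [V' [HW [HV' [HWy [HV'g H2]]]]]].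
  assert (Hc := cont_scal (-1) V' g HV'). rewrite vscalN1 in Hc.
  destruct (Hc HV'g) as [V [HV [HVg H3]]].
  exists V, W; repeat split; auto. intros g' y' Hg' Hy'. apply H2; auto.
  rewrite <- vscalN1. apply H3; auto.
Qed.

End Top.

Lemma list_max {J : Type} (Rl : J -> J -> Prop) (l : list (option J)) :
  (forall j, Rl j j) -> (forall a b c, Rl a b -> Rl b c -> Rl a c) ->
  (forall a b, In (Some a) l -> In (Some b) l -> Rl a b \/ Rl b a) ->
  (forall j, ~ In (Some j) l) \/ exists j0, In (Some j0) l /\ forall j, In (Some j) l -> Rl j j0.
Proof.
  intros Hr Ht. induction l as [|o l IH]; intro Htot.
  - left. intros j [].
  - assert (IH' : (forall j, ~ In (Some j) l) \/ exists j0, In (Some j0) l /\ forall j, In (Some j) l -> Rl j j0).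
    { apply IH. intros a b Ha Hb. apply Htot; right; auto. }
    destruct o as [j1|].
    + right. destruct IH' as [H|[j0 [Hj0 H]]].
      * exists j1. split. left; auto. intros j [Hj|Hj]. inversion Hj; subst; auto. exfalso; eapply H; eauto.
      * destruct (Htot j1 j0 (or_introl eq_refl) (or_intror Hj0)) as [H1|H1].
        -- exists j0. split. right; auto. intros j [Hj|Hj]. inversion Hj; subst; auto. auto.
        -- exists j1. split. left; auto. intros j [Hj|Hj]. inversion Hj; subst; auto. eauto.
    + destruct IH' as [H|[j0 [Hj0 H]]].
      * left. intros j [Hj|Hj]. discriminate. eapply H; eauto.
      * right. exists j0. split. right; auto. intros j [Hj|Hj]. discriminate. auto.
Qed.

Section Comp.
Context {X : BanachLattice} (tau : (X -> Prop) -> Prop) (Hlc : locally_convex_hausdorff tau)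
  (Hpos : tau (fun x => ~ positive_cone X x))
  (A : X -> Prop) (HAcomp : compact_in tau A).

Lemma closed_and K1 K2 : closed tau K1 -> closed tau K2 -> closed tau (fun x => K1 x /\ K2 x).
Proof.
  intros H1 H2. unfold closed. apply op_ext with (fun x => ~ K1 x \/ ~ K2 x).
  - intro x; split. intros [H|H] [? ?]; auto. intro H. apply not_and_or; auto.
  - apply op_or; auto.
Qed.

Lemma fip (I : Type) (K : I -> X -> Prop) : (forall i, closed tau (K i)) ->
  (forall l : list I, exists x, A x /\ forall i, In i l -> K i x) -> exists x, A x /\ forall i, K i x.
Proof.
  intros HK Hl. apply NNPP; intro Hn.
  assert (Hc : forall x, A x -> exists i, ~ K i x).
  { intros x Ax. apply not_all_ex_not. intro H. apply Hn. exists x; auto. }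
  destruct (HAcomp I (fun i x => ~ K i x) HK Hc) as [l Hl2].
  destruct (Hl l) as [x [Ax Hx]]. destruct (Hl2 x Ax) as [i [Hi Hi2]]. auto.
Qed.

Lemma usc_max (K : X -> Prop) (g : X -> R) : closed tau K -> (forall c, tau (fun w => g w < c)) ->
  (exists z, A z /\ K z) -> exists z0, A z0 /\ K z0 /\ forall z, A z -> K z -> g z <= g z0.
Proof.
  intros HK Hg [z1 [Az1 Kz1]]. apply NNPP; intro Hn.
  set (J := {z : X | A z /\ K z}).
  set (U := fun (o : option J) w => match o with None => ~ K w | Some s => g w < g (proj1_sig s) end).
  assert (HU : forall o, tau (U o)). { unfold closed in HK. intros [s|]; unfold U; simpl; auto. }
  assert (Hcov : forall w, A w -> exists o, U o w).
  { intros w Aw. destruct (classic (K w)) as [Kw|Kw].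
    - apply NNPP; intro Hn2. apply Hn. exists w. repeat split; auto. intros z Az Kz.
      apply Rnot_lt_le. intro Hlt. apply Hn2. exists (Some (exist _ z (conj Az Kz))). unfold U; simpl. auto.
    - exists None. unfold U; simpl; auto. }
  destruct (HAcomp _ U HU Hcov) as [l Hl]. unfold U in Hl.
  destruct (list_max (fun a b : J => g (proj1_sig a) <= g (proj1_sig b)) l) as [H|[j0 [Hj0 H]]].
  - intros; lra.
  - intros; lra.
  - intros a b _ _. lra.
  - destruct (Hl z1 Az1) as [[s|] [Hi Hs]]. eapply H; eauto. simpl in Hs; auto.
  - destruct j0 as [z0 [Az0 Kz0]] eqn:Ej.
    destruct (Hl z0 Az0) as [[s|] [Hi Hs]].
    + simpl in Hs. specialize (H s Hi). simpl in H. lra.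
    + simpl in Hs; auto.
Qed.

Lemma up1_closed c : closed tau (fun x => vle c x).
Proof.
  unfold closed. apply op_ext with (fun x => ~ positive_cone X (vadd x (vopp c))).
  - intro x. unfold positive_cone. rewrite <- vle_sub. tauto.
  - apply (cont_preimage tau Hlc (fun x => vadd x (vopp c)) (fun w => ~ positive_cone X w)). apply cont_transl; auto. auto.
Qed.

Lemma down1_closed c : closed tau (fun x => vle x c).
Proof.
  unfold closed. apply op_ext with (fun x => ~ positive_cone X (vadd (vscal (-1) x) c)).
  - intro x. unfold positive_cone. rewrite vscalN1, vaddC, <- vle_sub. tauto.
  - apply (cont_preimage tau Hlc (fun x => vadd (vscal (-1) x) c) (fun w => ~ positive_cone X w)).
    apply (cont_comp tau (fun x => vadd x c) (vscal (-1))). apply cont_transl; auto.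
    apply cont_scal; auto. auto.
Qed.

Lemma up_closed (KG : X -> Prop) : closed tau KG -> closed tau (fun y => exists g, A g /\ KG g /\ vle g y).
Proof.
  intro HKG. unfold closed. apply op_local; auto. intros y Hy.
  set (J := {p : (X * (X -> Prop)) * (X -> Prop) | tau (snd (fst p)) /\ tau (snd p) /\
      snd (fst p) (fst (fst p)) /\ snd p y /\
      forall g' y', snd (fst p) g' -> snd p y' -> ~ positive_cone X (vadd y' (vopp g'))}).
  set (U := fun (o : option J) w => match o with None => ~ KG w | Some q => snd (fst (proj1_sig q)) w end).
  set (Wf := fun (o : option J) w => match o with None => True | Some q => snd (proj1_sig q) w end).
  assert (HU : forall o, tau (U o)). { unfold closed in HKG. intros [q|]; unfold U; simpl; auto. exact (proj1 (proj2_sig q)). }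
  assert (HW : forall o, tau (Wf o)). { intros [q|]; unfold Wf; simpl. exact (proj1 (proj2 (proj2_sig q))). apply op_True; auto. }
  assert (Hcov : forall w, A w -> exists o, U o w).
  { intros w Aw. destruct (classic (KG w)) as [Kw|Kw].
    - assert (Hn : ~ positive_cone X (vadd y (vopp w))).
      { unfold positive_cone. rewrite <- vle_sub. intro H. apply Hy. exists w; auto. }
      destruct (sub_joint tau Hlc _ w y Hpos Hn) as [V [W [HV [HW' [HVw [HWy H]]]]]].
      exists (Some (exist _ ((w, V), W) (conj HV (conj HW' (conj HVw (conj HWy H)))))). unfold U; simpl. auto.
    - exists None. unfold U; simpl; auto. }
  destruct (HAcomp _ U HU Hcov) as [l Hl]. unfold U in Hl.
  exists (fun z => forall i, In i l -> Wf i z). split. apply op_list_inter; auto. split.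
  - intros [q|] Hi; unfold Wf; simpl; auto. exact (proj1 (proj2 (proj2 (proj2 (proj2_sig q))))).
  - intros z Hz [g [Ag [Kg Hgz]]]. destruct (Hl g Ag) as [[q|] [Hi Hq]]; simpl in Hq; auto.
    specialize (Hz _ Hi). unfold Wf in Hz; simpl in Hz.
    apply (proj2 (proj2 (proj2 (proj2 (proj2_sig q)))) g z Hq Hz).
    unfold positive_cone. rewrite <- vle_sub. auto.
Qed.

End Comp.

Lemma riesz {X : BanachLattice} (e x0 x1 : X) t : vle vzero e -> vle vzero x0 -> vle vzero x1 -> 0 < t < 1 ->
  vle e (cmb t x0 x1) -> exists u0 u1, vle vzero u0 /\ vle u0 x0 /\ vle vzero u1 /\ vle u1 x1 /\
    e = cmb t u0 u1.
Proof.
  intros He H0 H1 Ht H. unfold cmb in *.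
  set (p := vscal (1 - t) x0) in *. set (q := vscal t x1) in *.
  set (S := vsup (vopp e) (vopp p)).
  assert (Hp : vle vzero p). { pose proof (vle_scal (1-t) _ _ ltac:(lra) H0) as Hx. rewrite vscal0r in Hx. exact Hx. }
  assert (Hq : vle vzero q). { pose proof (vle_scal t _ _ ltac:(lra) H1) as Hx. rewrite vscal0r in Hx. exact Hx. }
  assert (HS0 : vle S vzero).
  { apply vsup_least; rewrite <- vopp0; apply vle_opp; auto. }
  assert (HpS : vle (vopp p) S) by apply vsup_ub_r.
  assert (HeS : vle (vopp e) S) by apply vsup_ub_l.
  assert (Hw0pos : vle vzero (vopp S)). { rewrite <- vopp0. apply vle_opp; auto. }
  assert (Hw0p : vle (vopp S) p). { rewrite <- (vopp_opp p). apply vle_opp; auto. }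
  assert (HSle : vle S (vadd q (vopp e))).
  { apply vsup_least.
    - pose proof (vle_add _ _ (vopp e) Hq) as Hx. rewrite vadd0l in Hx. exact Hx.
    - apply vle_sub in H. apply vle_sub. rewrite vopp_opp. rewrite (vaddC _ p), vaddA. exact H. }
  assert (Hw1 : vle (vadd e S) q).
  { pose proof (vle_addl e _ _ HSle) as Hx. rewrite (vaddC q), vaddA, vaddN, vadd0l in Hx. exact Hx. }
  assert (Hw1pos : vle vzero (vadd e S)).
  { pose proof (vle_addl e _ _ HeS) as Hx. rewrite vaddN in Hx. exact Hx. }
  exists (vscal (/ (1 - t)) (vopp S)), (vscal (/ t) (vadd e S)).
  assert (Hi0 : 0 <= / (1 - t)) by (apply Rlt_le, Rinv_0_lt_compat; lra).
  assert (Hi1 : 0 <= / t) by (apply Rlt_le, Rinv_0_lt_compat; lra).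
  repeat split.
  - pose proof (vle_scal _ _ _ Hi0 Hw0pos) as Hx. rewrite vscal0r in Hx. exact Hx.
  - pose proof (vle_scal _ _ _ Hi0 Hw0p) as Hx. unfold p in Hx. rewrite vscalA in Hx.
    replace (/ (1 - t) * (1 - t)) with 1 in Hx by (field; lra). rewrite vscal1 in Hx. exact Hx.
  - pose proof (vle_scal _ _ _ Hi1 Hw1pos) as Hx. rewrite vscal0r in Hx. exact Hx.
  - pose proof (vle_scal _ _ _ Hi1 Hw1) as Hx. unfold q in Hx. rewrite vscalA in Hx.
    replace (/ t * t) with 1 in Hx by (field; lra). rewrite vscal1 in Hx. exact Hx.
  - rewrite !vscalK by lra. rewrite vaddA, (vaddC (vopp S) e), <- vaddA, vaddNl, vadd0. reflexivity.
Qed.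

Lemma eps_le (a b : R) : (forall eps, 0 < eps -> a <= b + eps) -> a <= b.
Proof.
  intro H. apply Rnot_lt_le. intro Hlt. specialize (H ((a - b) / 2) ltac:(lra)). lra.
Qed.

Section Gauge.
Context {X : BanachLattice} (tau : (X -> Prop) -> Prop) (Hlc : locally_convex_hausdorff tau)
  (W : X -> Prop) (HWo : tau W) (HW0 : W vzero) (HWc : convex_set W).

Definition Lg (z : X) (l : R) := 0 < l /\ W (vscal (/ l) z).

Lemma absorb z : exists l, Lg z l.
Proof.
  pose proof Hlc as HLC. destruct HLC as [_ [_ [_ [Hsc _]]]].
  assert (H0 : W (vscal 0 z)) by (rewrite vscal0l; exact HW0).
  destruct (Hsc W 0 z HWo H0) as [d [V [Hd [HV [HVz H]]]]].
  exists (2 / d). split. apply Rdiv_lt_0_compat; lra.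
  replace (/ (2 / d)) with (d / 2) by (field; lra). apply H; auto.
  rewrite Rminus_0_r, Rabs_right; lra.
Qed.

Lemma Lg_mono z l m : Lg z l -> l <= m -> Lg z m.
Proof.
  intros [Hl Hz] Hlm. split. lra.
  pose proof (HWc vzero (vscal (/ l) z) (l / m) HW0 Hz) as H.
  rewrite vscal0r, vadd0l, vscalA in H. replace (l / m * / l) with (/ m) in H by (field; lra).
  apply H. split. apply Rlt_le, Rdiv_lt_0_compat; lra.
  apply Rmult_le_reg_r with m. lra. unfold Rdiv. rewrite Rmult_assoc, Rinv_l by lra. lra.
Qed.

Definition gauge_spec (z : X) (q : R) :=
  (forall l, Lg z l -> q <= l) /\ (forall r, (forall l, Lg z l -> r <= l) -> r <= q).

Lemma gauge_ex : exists p : X -> R, forall z, gauge_spec z (p z).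
Proof.
  apply fun_choice'. intro z.
  set (E := fun r => exists l, Lg z l /\ r = - l).
  assert (Hb : bound E). { exists 0. intros r [l [[Hl _] ->]]. lra. }
  assert (He : exists r, E r). { destruct (absorb z) as [l Hl]. exists (- l), l; auto. }
  destruct (completeness E Hb He) as [m [Hm1 Hm2]].
  exists (- m). split.
  - intros l Hl. assert (-l <= m) by (apply Hm1; exists l; auto). lra.
  - intros r Hr. assert (m <= - r). { apply Hm2. intros s [l [Hl ->]]. specialize (Hr l Hl). lra. } lra.
Qed.

Context (p : X -> R) (Hp : forall z, gauge_spec z (p z)).

Lemma p_nonneg z : 0 <= p z.
Proof. apply (proj2 (Hp z)). intros l [Hl _]. lra. Qed.

Lemma p_zero : p vzero <= 0.
Proof.
  apply Rnot_lt_le; intro H. assert (Hl : Lg vzero (p vzero / 2)).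
  { split. lra. rewrite vscal0r. exact HW0. }
  pose proof (proj1 (Hp vzero) _ Hl). lra.
Qed.

Lemma p_lt c z : p z < c -> exists l, Lg z l /\ l < c.
Proof.
  intro H. apply NNPP; intro Hn. assert (c <= p z).
  { apply (proj2 (Hp z)). intros l Hl. apply Rnot_lt_le. intro Hlt. apply Hn. exists l; auto. }
  lra.
Qed.

Lemma p_usc c : tau (fun z => p z < c).
Proof.
  apply op_local; auto. intros z Hz. destruct (p_lt c z Hz) as [l [[Hl HWl] Hlc']].
  exists (fun w => W (vscal (/ l) w)). split.
  - apply (cont_preimage tau Hlc (vscal (/ l)) W); auto. apply cont_scal; auto.
  - split; auto. intros w Hw. pose proof (proj1 (Hp w) l (conj Hl Hw)). lra.
Qed.

Lemma p_one z : p z < 1 -> W z.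
Proof.
  intro H. destruct (p_lt 1 z H) as [l [Hl Hl1]].
  destruct (Lg_mono z l 1 Hl ltac:(lra)) as [_ H1]. rewrite Rinv_1, vscal1 in H1. exact H1.
Qed.

Lemma p_convex t u v : 0 < t < 1 -> p (cmb t u v) <= (1 - t) * p u + t * p v.
Proof.
  intro Ht. apply eps_le. intros eps Heps.
  destruct (p_lt (p u + eps) u ltac:(lra)) as [l [[Hl Hlu] Hl2]].
  destruct (p_lt (p v + eps) v ltac:(lra)) as [m [[Hm Hmv] Hm2]].
  set (k := (1 - t) * l + t * m).
  assert (Hk : 0 < k). { unfold k. assert (0 < (1-t) * l) by (apply Rmult_lt_0_compat; lra).
    assert (0 < t * m) by (apply Rmult_lt_0_compat; lra). lra. }
  assert (HL : Lg (cmb t u v) k).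
  { split; auto.
    pose proof (HWc _ _ (t * m / k) Hlu Hmv) as H.
    replace (vscal (/ k) (cmb t u v)) with
      (vadd (vscal (1 - t * m / k) (vscal (/ l) u)) (vscal (t * m / k) (vscal (/ m) v))).
    - apply H. split.
      + apply Rlt_le. apply Rdiv_lt_0_compat; auto. apply Rmult_lt_0_compat; lra.
      + apply Rmult_le_reg_r with k; auto. unfold Rdiv. rewrite Rmult_assoc, Rinv_l by lra.
        unfold k. assert (0 < (1-t) * l) by (apply Rmult_lt_0_compat; lra). lra.
    - unfold cmb. rewrite vscalDr, !vscalA. unfold k in *. f_equal; f_equal; field; repeat split; first [apply Rgt_not_eq; exact Hk | lra]. }
  pose proof (proj1 (Hp _) k HL).
  assert ((1 - t) * l <= (1 - t) * (p u + eps)) by (apply Rmult_le_compat_l; lra).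
  assert (t * m <= t * (p v + eps)) by (apply Rmult_le_compat_l; lra).
  unfold k in *. lra.
Qed.

End Gauge.

Lemma sig_eq {T : Type} {P : T -> Prop} (s t : {x : T | P x}) : proj1_sig s = proj1_sig t -> s = t.
Proof. destruct s as [s ps], t as [t pt]; simpl; intro E; subst; f_equal; apply proof_irrelevance. Qed.

Lemma combo_shift {X : BanachLattice} t (x y c : X) :
  vadd (cmb t x y) c = cmb t (vadd x c) (vadd y c).
Proof.
  unfold cmb. rewrite !vscalDr, vadd_swap4, <- vscalDl.
  replace (1 - t + t) with 1 by ring. rewrite vscal1. reflexivity.
Qed.

Definition Fam {X : BanachLattice} (tau : (X -> Prop) -> Prop) (A : X -> Prop) (a : X) (S : X -> Prop) :=
  (exists K, closed tau K /\ forall x, S x <-> A x /\ K x) /\ (exists x, S x) /\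
  (forall x, S x -> vle a x) /\ (forall x y, S x -> A y -> vle x y -> S y) /\
  (forall x0 x1 t, A x0 -> A x1 -> 0 < t < 1 -> S (cmb t x0 x1) -> S x0 /\ S x1).

Theorem mainTheorem12 (X : BanachLattice) (tau : (X -> Prop) -> Prop)
  (Htau : sufficiently_rich tau) (A : X -> Prop)
  (HApos : forall x, A x -> positive_cone X x)
  (HAcomp : compact_in tau A) (HAconv : convex_set A) (HAsolid : positive_solid A) :
  forall a, extreme_point A a -> exists b, order_extreme_point A b /\ vle a b.
Proof.
  intros a [Aa Hext]. destruct Htau as [Hlc [_ Hpos]].
  assert (Maext : forall x0 x1 t, A x0 -> A x1 -> 0 < t < 1 -> vle a (cmb t x0 x1) -> vle a x0 /\ vle a x1).
  { intros x0 x1 t A0 A1 Ht H.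
    destruct (riesz a x0 x1 t (HApos a Aa) (HApos x0 A0) (HApos x1 A1) Ht H)
      as [u0 [u1 [H0 [H0x [H1 [H1x Heq]]]]]].
    assert (Au0 : A u0) by (apply (HAsolid u0 x0); auto).
    assert (Au1 : A u1) by (apply (HAsolid u1 x1); auto).
    destruct (Hext u0 u1 t Au0 Au1 Ht Heq) as [E0 E1]. rewrite E0 in H0x. rewrite E1 in H1x. auto. }
  set (T := {S : X -> Prop | Fam tau A a S}).
  set (R1 := fun (S1 S2 : T) => forall x, proj1_sig S2 x -> proj1_sig S1 x).
  assert (Z1 : exists Fm : T, forall S, R1 Fm S -> S = Fm).
  { apply ZornMod.ZornP.
    - intros t x; auto.
    - intros r s t H1 H2 x Hx; auto.
    - intros s t H1 H2. apply sig_eq. apply set_ext. intro x; split; auto.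
    - intros C Ctot.
      set (J := {pr : T * (X -> Prop) | C (fst pr) /\ closed tau (snd pr) /\
                  forall x, proj1_sig (fst pr) x <-> A x /\ snd pr x}).
      set (Sx := fun x => A x /\ vle a x /\ forall S : T, C S -> proj1_sig S x).
      assert (Hback : forall x, A x -> vle a x -> (forall j : J, snd (proj1_sig j) x) -> Sx x).
      { intros x Ax Hax Hj. split; auto. split; auto. intros S CS.
        destruct (proj2_sig S) as [[K [HK Hiff]] _].
        apply Hiff. split; auto. exact (Hj (exist _ (S, K) (conj CS (conj HK Hiff)))). }
      assert (HF : Fam tau A a Sx).
      { split; [|split; [|split; [|split]]].
        - exists (fun x => vle a x /\ forall j : J, snd (proj1_sig j) x). split.
          + apply closed_and; auto. apply up1_closed; auto.
            unfold closed. apply op_ext with (fun x => exists j : J, ~ snd (proj1_sig j) x).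
            * intro x; split. intros [j Hj] H; auto. intro H. apply not_all_ex_not; auto.
            * apply op_union; auto. intro j. exact (proj1 (proj2 (proj2_sig j))).
          + intro x; split.
            * intros [Ax [Hax HS]]. split; auto. split; auto. intro j.
              destruct (proj2_sig j) as [Cj [_ Hiff]]. apply Hiff; auto.
            * intros [Ax [Hax Hj]]. apply Hback; auto.
        - set (Kf := fun (o : option J) x => match o with None => vle a x | Some j => snd (proj1_sig j) x end).
          destruct (fip tau A HAcomp _ Kf) as [x [Ax Hx]].
          + intros [j|]; unfold Kf. exact (proj1 (proj2 (proj2_sig j))). apply up1_closed; auto.
          + intro l. destruct (list_max (fun j1 j2 : J => R1 (fst (proj1_sig j1)) (fst (proj1_sig j2))) l)
              as [Hn|[j0 [Hj0 Hmx]]].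
            * intros j x Hx; auto.
            * intros j1 j2 j3 H1 H2 x Hx; auto.
            * intros j1 j2 _ _. apply Ctot. exact (proj1 (proj2_sig j1)). exact (proj1 (proj2_sig j2)).
            * exists a. split; auto. intros [j|] Hi; unfold Kf. exfalso; eapply Hn; eauto. apply vle_refl.
            * destruct (proj2_sig (fst (proj1_sig j0))) as [_ [[x Hx] [Hxa _]]].
              destruct (proj2_sig j0) as [_ [_ Hiff0]].
              exists x. split. apply Hiff0; auto. intros [j|] Hi; unfold Kf.
              -- destruct (proj2_sig j) as [_ [_ Hiff]]. apply Hiff. apply (Hmx j Hi). auto.
              -- auto.
          + exists x. apply Hback; auto. exact (Hx None). intro j. exact (Hx (Some j)).
        - intros x [_ [H _]]; auto.
        - intros x y [Ax [Hax HS]] Ay Hxy. split; auto. split. apply vle_trans with x; auto.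
          intros S CS. destruct (proj2_sig S) as [_ [_ [_ [Hup _]]]]. apply Hup with x; auto.
        - intros x0 x1 t A0 A1 Ht [Ac [Hac HS]].
          destruct (Maext x0 x1 t A0 A1 Ht Hac) as [Ha0 Ha1].
          split; (split; [auto | split; [auto|]]); intros S CS;
            destruct (proj2_sig S) as [_ [_ [_ [_ Hex]]]]; destruct (Hex x0 x1 t A0 A1 Ht (HS S CS)); auto. }
      exists (exist _ Sx HF). intros s Cs x Hx. simpl in Hx. destruct Hx as [_ [_ H]]. auto. }
  destruct Z1 as [Fm HFm].
  set (F := proj1_sig Fm).
  destruct (proj2_sig Fm) as [[KF [HKF HFiff]] [Fne [Fa [Fup Fext]]]]. fold F in HFiff, Fne, Fa, Fup, Fext.
  set (T2 := {x : X | F x}).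
  set (R2 := fun (x y : T2) => vle (proj1_sig y) (proj1_sig x)).
  assert (Z2 : exists m : T2, forall s, R2 m s -> s = m).
  { apply ZornMod.ZornP.
    - intro t. apply vle_refl.
    - intros r s t H1 H2. unfold R2 in *. apply vle_trans with (proj1_sig s); auto.
    - intros s t H1 H2. apply sig_eq. apply vle_anti; auto.
    - intros C Ctot.
      set (J := {c : T2 | C c}).
      set (Kf := fun (o : option J) z => match o with None => KF z | Some c => vle z (proj1_sig (proj1_sig c)) end).
      destruct (fip tau A HAcomp _ Kf) as [z [Az Hz]].
      + intros [c|]; unfold Kf. apply down1_closed; auto. auto.
      + intro l. destruct (list_max (fun c1 c2 : J => R2 (proj1_sig c1) (proj1_sig c2)) l)
          as [Hn|[c0 [Hc0 Hmx]]].
        * intros c; apply vle_refl.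
        * intros c1 c2 c3 H1 H2. unfold R2 in *. apply vle_trans with (proj1_sig (proj1_sig c2)); auto.
        * intros c1 c2 _ _. apply Ctot. exact (proj2_sig c1). exact (proj2_sig c2).
        * destruct Fne as [x Fx]. apply HFiff in Fx. destruct Fx as [Ax Kx].
          exists x. split; auto. intros [c|] Hi; unfold Kf. exfalso; eapply Hn; eauto. auto.
        * exists (proj1_sig (proj1_sig c0)). destruct (HFiff (proj1_sig (proj1_sig c0))) as [Hi1 _].
          destruct (Hi1 (proj2_sig (proj1_sig c0))) as [A0 K0].
          split; auto. intros [c|] Hi; unfold Kf; auto. apply (Hmx c Hi).
      + assert (Fz : F z) by (apply HFiff; split; auto; exact (Hz None)).
        exists (exist _ z Fz). intros s Cs. unfold R2. simpl. exact (Hz (Some (exist _ s Cs))). }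
  destruct Z2 as [m Hm].
  set (mv := proj1_sig m).
  assert (Fm' : F mv) by exact (proj2_sig m).
  assert (Hmin : forall x, F x -> vle x mv -> x = mv).
  { intros x Fx Hx. pose proof (Hm (exist _ x Fx) Hx) as E. apply (f_equal (@proj1_sig _ _)) in E. exact E. }
  assert (Single : forall y, F y -> y = mv).
  { intros y Fy. apply NNPP; intro Hne.
    pose proof Hlc as HLC. destruct HLC as [_ [Hhaus [_ [_ Hloc]]]].
    destruct (Hhaus mv y (fun E => Hne (eq_sym E))) as [U [V [HU [HV [Um [Vy Hdis]]]]]].
    destruct (Hloc U mv HU Um) as [W [HW [Wm [Wc WU]]]].
    assert (nWy : ~ W y) by (intro H; exact (Hdis y (WU y H) Vy)).
    set (W' := fun z => W (vadd z mv)).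
    assert (HW' : tau W') by (apply (cont_preimage tau Hlc (fun z => vadd z mv) W); auto; apply cont_transl; auto).
    assert (W'0 : W' vzero) by (unfold W'; rewrite vadd0l; exact Wm).
    assert (W'c : convex_set W').
    { intros x1 x2 t H1 H2 Ht. unfold W'. change (W (vadd (cmb t x1 x2) mv)). rewrite combo_shift. apply Wc; auto. }
    destruct (gauge_ex tau Hlc W' HW' W'0) as [p Hp].
    set (g := fun z => p (vadd z (vopp mv))).
    assert (gusc : forall c, tau (fun z => g z < c)).
    { intro c. apply (cont_preimage tau Hlc (fun z => vadd z (vopp mv)) (fun w => p w < c)).
      apply cont_transl; auto. apply (p_usc tau Hlc W' HW' p Hp). }
    assert (gm : g mv <= 0).
    { unfold g. rewrite vaddN. apply (p_zero W' W'0 p Hp). }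
    assert (gy : 1 <= g y).
    { apply Rnot_lt_le. intro H. apply nWy. pose proof (p_one W' W'0 W'c p Hp _ H) as H'.
      unfold W' in H'. rewrite <- vaddA, vaddNl, vadd0 in H'. exact H'. }
    assert (gconv : forall t u v, 0 < t < 1 -> g (cmb t u v) <= (1 - t) * g u + t * g v).
    { intros t u v Ht. unfold g. rewrite combo_shift. apply (p_convex W' W'c p Hp); auto. }
    destruct (usc_max tau A HAcomp KF g HKF gusc) as [z0 [Az0 [Kz0 Hmax]]].
    { exists mv. apply HFiff; auto. }
    set (M := g z0).
    assert (M1 : 1 <= M). { apply HFiff in Fy. destruct Fy. pose proof (Hmax y H H0). unfold M. lra. }
    set (KG := fun w => KF w /\ M <= g w).
    assert (HKG : closed tau KG).
    { apply closed_and; auto. unfold closed. apply op_ext with (fun w => g w < M).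
      intro w; split; intro H; lra. auto. }
    set (Gh := fun x => A x /\ exists w, A w /\ KG w /\ vle w x).
    assert (GhF : forall x, Gh x -> F x).
    { intros x [Ax [w [Aw [[Kw _] Hwx]]]]. apply Fup with w; auto. apply HFiff; auto. }
    assert (FamG : Fam tau A a Gh).
    { split; [|split; [|split; [|split]]].
      - exists (fun y => exists w, A w /\ KG w /\ vle w y). split.
        + apply up_closed; auto.
        + intro x; split; auto.
      - exists z0. split; auto. exists z0. split; auto. split. split; auto. unfold M; lra. apply vle_refl.
      - intros x Hx. apply Fa, GhF; auto.
      - intros x y' [Ax [w [Aw [Kw Hwx]]]] Ay Hxy. split; auto. exists w. split; auto. split; auto.
        apply vle_trans with x; auto.
      - intros x0 x1 t A0 A1 Ht [Ac [w [Aw [[Kw Mw] Hwx]]]].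
        destruct (riesz w x0 x1 t (HApos w Aw) (HApos x0 A0) (HApos x1 A1) Ht Hwx)
          as [u0 [u1 [H0 [H0x [H1 [H1x Heq]]]]]].
        assert (Au0 : A u0) by (apply (HAsolid u0 x0); auto).
        assert (Au1 : A u1) by (apply (HAsolid u1 x1); auto).
        assert (Fw : F w) by (apply HFiff; auto).
        rewrite Heq in Fw. destruct (Fext u0 u1 t Au0 Au1 Ht Fw) as [F0 F1].
        apply HFiff in F0. apply HFiff in F1. destruct F0 as [_ K0]. destruct F1 as [_ K1].
        pose proof (Hmax u0 Au0 K0) as g0. pose proof (Hmax u1 Au1 K1) as g1.
        pose proof (gconv t u0 u1 Ht) as gc. rewrite <- Heq in gc. fold M in g0, g1.
        assert (E0 : M <= g u0).
        { apply Rnot_lt_le; intro Hl. assert ((1 - t) * g u0 < (1 - t) * M) by (apply Rmult_lt_compat_l; lra).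
          assert (t * g u1 <= t * M) by (apply Rmult_le_compat_l; lra). lra. }
        assert (E1 : M <= g u1).
        { apply Rnot_lt_le; intro Hl. assert (t * g u1 < t * M) by (apply Rmult_lt_compat_l; lra).
          assert ((1 - t) * g u0 <= (1 - t) * M) by (apply Rmult_le_compat_l; lra). lra. }
        split; split; auto.
        + exists u0. repeat split; auto.
        + exists u1. repeat split; auto. }
    assert (E : exist _ Gh FamG = Fm).
    { apply HFm. intros x Hx. simpl. apply GhF; auto. }
    apply (f_equal (@proj1_sig _ _)) in E. simpl in E. fold F in E.
    assert (Ghm : Gh mv) by (rewrite E; auto).
    destruct Ghm as [_ [w [Aw [[Kw Mw] Hwm]]]].
    assert (w = mv) by (apply Hmin; auto; apply HFiff; auto). subst w. lra. }
  exists mv. split.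
  - split. apply HFiff in Fm'. tauto.
    intros x0 x1 t A0 A1 Ht Hle.
    assert (Ac : A (cmb t x0 x1)) by (apply HAconv; auto; lra).
    assert (Fc : F (cmb t x0 x1)) by (apply Fup with mv; auto).
    destruct (Fext x0 x1 t A0 A1 Ht Fc) as [F0 F1].
    split. apply Single; auto. symmetry; apply Single; auto.
  - apply Fa; auto.
Qed.
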